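(* Let $\mathcal V$ be a subvariety of $\mathsf V(S_7)$ and let $k\geq 1$. Then $S_c(a_1\cdots a_k)\notin\mathcal V$ if and only if $\mathcal V$ satisfies the identity $x_1\cdots x_k\approx (x_1\cdots x_k)^2$.
   Context: $S_7$ is the ai-semiring on $\{\infty,a,1\}$ with $x+x=x$, $x+y=\infty$ for $x\neq y$, and commutative multiplication with $\infty$ a zero, $a\cdot a=\infty$, $a\cdot 1=a$, $1\cdot1=1$; $\mathsf V(S_7)$ is the variety it generates. For $k\ge1$, $S_c(a_1\cdots a_k)$ is the flat semiring whose elements are $\infty$ together with all nonempty subwords of $a_1\cdots a_k$ in the free commutative semigroup (products $a_{i_1}\cdots a_{i_m}$ with $1\le i_1<\dots<i_m\le k$); the product of two such words is their product if that is again such a subword (i.e. they share no letter) and $\infty$ otherwise; $\infty$ is a multiplicative zero; $x+x=x$ and $x+y=\infty$ for $x\neq y$. *)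

(* Defs.v *)
From mathcomp Require Import all_boot.
Set Implicit Arguments. Unset Strict Implicit. Unset Printing Implicit Defensive.

Inductive term : Type :=
| Var : nat -> term
| Add : term -> term -> term
| Mul : term -> term -> term.

Fixpoint eval (T : Type) (add mul : T -> T -> T) (v : nat -> T) (t : term) : T :=
  match t with
  | Var n => v n
  | Add t1 t2 => add (eval add mul v t1) (eval add mul v t2)
  | Mul t1 t2 => mul (eval add mul v t1) (eval add mul v t2)
  end.

Definition satisfies (T : Type) (add mul : T -> T -> T) (u w : term) : Prop :=
  forall v : nat -> T, eval add mul v u = eval add mul v w.

Inductive S7 : Type := S7inf | S7a | S7one.

Definition S7_add (x y : S7) : S7 :=
  match x, y with
  | S7inf, S7inf => S7inf
  | S7a, S7a => S7a
  | S7one, S7one => S7one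
  | _, _ => S7inf
  end.

Definition S7_mul (x y : S7) : S7 :=
  match x, y with
  | S7one, S7one => S7one
  | S7a, S7one => S7a
  | S7one, S7a => S7a
  | _, _ => S7inf
  end.

(* Membership in V(S_7): satisfying every identity of S_7 (Birkhoff).
   Note that the ai-semiring axioms are identities of S_7, so every such
   algebra is an ai-semiring. *)
Definition in_VS7 (T : Type) (add mul : T -> T -> T) : Prop :=
  forall u w : term, satisfies S7_add S7_mul u w -> satisfies add mul u w.

(* The subvariety of V(S_7) defined (relative to V(S_7)) by the set of
   identities Sigma: every subvariety of V(S_7) is of this form. *)
Definition in_subvar (Sigma : term -> term -> Prop)
  (T : Type) (add mul : T -> T -> T) : Prop :=
  in_VS7 add mul /\ forall u w, Sigma u w -> satisfies add mul u w.

Definition subvar_satisfies (Sigma : term -> term -> Prop) (u w : term) : Prop :=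
  forall (T : Type) (add mul : T -> T -> T),
    in_subvar Sigma add mul -> satisfies add mul u w.

(* The flat semiring S_c(a_1 ... a_k): oo (None) together with the nonempty
   subwords of a_1...a_k, i.e. nonempty subsets of {1..k} (indexed by 'I_k). *)
Definition Sc (k : nat) : Type := option {A : {set 'I_k} | A != set0}.

Definition Sc_add (k : nat) (x y : Sc k) : Sc k :=
  if x == y then x else None.

Definition Sc_mul (k : nat) (x y : Sc k) : Sc k :=
  match x, y with
  | Some X, Some Y =>
      if [disjoint val X & val Y] then (insub (val X :|: val Y) : Sc k) else None
  | _, _ => None
  end.

(* The term x_1 x_2 ... x_k (variables x_0, ..., x_{k-1}), for k >= 1 *)
Fixpoint prodx (k : nat) : term :=
  match k with
  | 0 => Var 0
  | 1 => Var 0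
  | k'.+1 => Mul (prodx k') (Var k')
  end.

(* Main.v *)
Require Import Defs.
From mathcomp Require Import all_boot.
From HB Require Import structures.
From Stdlib Require Import Classical.
Set Implicit Arguments. Unset Strict Implicit. Unset Printing Implicit Defensive.

Definition S7_eqb (x y : S7) : bool :=
  match x, y with S7inf,S7inf|S7a,S7a|S7one,S7one => true | _,_ => false end.
Lemma S7_eqP : Equality.axiom S7_eqb. Proof. by case; case; constructor. Qed.
HB.instance Definition _ := hasDecEq.Build S7 S7_eqP.

Lemma S7_mulA : associative S7_mul. Proof. by do 3 case. Qed.
Lemma S7_mulC : commutative S7_mul. Proof. by do 2 case. Qed.
Lemma S7_mul1 : left_id S7one S7_mul. Proof. by case. Qed.
HB.instance Definition _ := Monoid.isComLaw.Build S7 S7one S7_mul S7_mulA S7_mulC S7_mul1.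

Fixpoint subst (s : nat -> term) (t : term) : term :=
  match t with Var n => s n | Add a b => Add (subst s a) (subst s b)
  | Mul a b => Mul (subst s a) (subst s b) end.

Lemma eval_subst T (add mul : T -> T -> T) v s t :
  eval add mul v (subst s t) = eval add mul (fun n => eval add mul v (s n)) t.
Proof. by elim: t => //= a IHa b IHb; rewrite IHa IHb. Qed.

Lemma eval_ext T (add mul : T -> T -> T) v v' t :
  (forall n, v n = v' n) -> eval add mul v t = eval add mul v' t.
Proof. by move=> H; elim: t => //= a IHa b IHb; rewrite IHa IHb. Qed.

Fixpoint vlt (k : nat) (t : term) : bool :=
  match t with Var n => n < k | Add a b => vlt k a && vlt k b
  | Mul a b => vlt k a && vlt k b end.

Lemma eval_agree k T (add mul : T -> T -> T) v v' t :
  vlt k t -> (forall n, n < k -> v n = v' n) -> eval add mul v t = eval add mul v' t.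
Proof.
move=> + H; elim: t => /= [n /H //| a IHa b IHb /andP[/IHa -> /IHb ->] |
  a IHa b IHb /andP[/IHa -> /IHb ->]] //.
Qed.

Lemma vlt_subst k s t : (forall n, vlt k (s n)) -> vlt k (subst s t).
Proof. by move=> H; elim: t => //= a -> b ->. Qed.

Lemma eval_one t : eval S7_add S7_mul (fun _ => S7one) t = S7one.
Proof. by elim: t => //= a -> b ->. Qed.

Fixpoint mulopt k (t : term) (l : seq 'I_k) : term :=
  match l with [::] => t | i :: l' => mulopt (Mul t (Var i)) l' end.

Lemma vlt_mulopt k t (l : seq (ordinal k)) : vlt k t -> vlt k (mulopt t l).
Proof. by elim: l t => //= i l IH t Ht; apply: IH; rewrite /= Ht ltn_ord. Qed.

Lemma eval_mulopt_cong T (add mul : T -> T -> T) v k t t' (l : seq 'I_k) :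
  eval add mul v t = eval add mul v t' ->
  eval add mul v (mulopt t l) = eval add mul v (mulopt t' l).
Proof. by elim: l t t' => //= i l IH t t' H; apply: IH => /=; rewrite H. Qed.

Lemma vlt_prodx_gen n m : n < m -> vlt m (prodx n.+1).
Proof.
elim: n => [//|n IH] H.
change (prodx n.+2) with (Mul (prodx n.+1) (Var n.+1)).
by rewrite /= H IH // ltnW.
Qed.

Lemma vlt_prodx k : 1 <= k -> vlt k (prodx k).
Proof. by case: k => // k _; apply: vlt_prodx_gen. Qed.

Definition f7 v t := eval S7_add S7_mul v t.

Lemma prodx_big k v : 1 <= k ->
  f7 v (prodx k) = \big[S7_mul/S7one]_(i < k) v (val i).
Proof.
case: k => // k _; elim: k => [|k IH]; first by rewrite big_ord1 /f7 /=.
rewrite big_ord_recr /=; rewrite /f7 in IH *.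
change (prodx k.+2) with (Mul (prodx k.+1) (Var k.+1)).
by rewrite /= IH.
Qed.

Lemma set1_neq0 k (i : 'I_k) : [set i] != set0.
Proof. by apply/set0Pn; exists i; rewrite set11. Qed.

Definition sing k (i : 'I_k) : {A : {set 'I_k} | A != set0} := exist _ [set i] (set1_neq0 i).
Definition ev k (n : nat) : Sc k :=
  match (insub n : option 'I_k) with Some i => Some (sing i) | None => None end.
Definition Sce k t := eval (@Sc_add k) (@Sc_mul k) (@ev k) t.
Definition ej k (j : 'I_k) (n : nat) : S7 :=
  if n == val j then S7a else if n < k then S7one else S7inf.

Lemma S7_addid x : S7_add x x = x. Proof. by case: x. Qed.
Lemma S7_addinfl x : S7_add S7inf x = S7inf. Proof. by case: x. Qed.
Lemma S7_addinfr x : S7_add x S7inf = S7inf. Proof. by case: x. Qed.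
Lemma S7_mulinfl x : S7_mul S7inf x = S7inf. Proof. by case: x. Qed.
Lemma S7_mulinfr x : S7_mul x S7inf = S7inf. Proof. by case: x. Qed.

Lemma big_ej k (j : 'I_k) (A : {set 'I_k}) :
  \big[S7_mul/S7one]_(i in A) ej j (val i) = if j \in A then S7a else S7one.
Proof.
have E : forall i : 'I_k, i != j -> ej j (val i) = S7one.
  by move=> i Hij; rewrite /ej (inj_eq val_inj) (negbTE Hij) ltn_ord.
case: ifP => Hj.
  rewrite (bigD1 j) //= big1; first by rewrite /ej eqxx.
  by move=> i /andP[_ Hij]; apply: E.
by apply: big1 => i Hi; apply: E; apply: contraFneq Hj => <-.
Qed.

Lemma Inv2 k t Y : Sce k t = Some Y ->
  forall v, f7 v t = \big[S7_mul/S7one]_(i in val Y) v (val i).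
Proof.
elim: t Y => [n|a IHa b IHb|a IHa b IHb] Y /=.
- rewrite /Sce /= /ev; case: insubP => [i _ Hi|//] [<-] v /=.
  by rewrite big_set1 Hi.
- rewrite /Sce /= /Sc_add; case: eqP => [E H|_ //] v.
  have H' : Sce k b = Some Y by rewrite /Sce -E.
  by rewrite /f7 /= -/(f7 v a) -/(f7 v b) (IHa _ H) (IHb _ H') S7_addid.
- rewrite /Sce /=; rewrite -/(Sce k a) -/(Sce k b); case Ea: (Sce k a) => [Y1|] //; case Eb: (Sce k b) => [Y2|] //.
  rewrite /Sc_mul; case: ifP => Hdis; last by []. 
  case: insubP => [Z _ HZ|]; last by []. case=> <- v.
  rewrite /f7 /= -/(f7 v a) -/(f7 v b) (IHa _ Ea) (IHb _ Eb) HZ.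
  rewrite -bigU //; apply: eq_bigl => i; by rewrite !inE.
Qed.

Lemma InvN k (hk : 0 < k) t : Sce k t = None -> exists j : 'I_k, f7 (ej j) t = S7inf.
Proof.
elim: t => [n|a IHa b IHb|a IHa b IHb] /=.
- rewrite /Sce /= /ev; case: insubP => [i _ _ //|Hn] _.
  exists (Ordinal hk); rewrite /f7 /= /ej /= (negbTE Hn).
  by case: eqP => // Hn0; move: Hn; rewrite Hn0 hk.
- rewrite /Sce /= /Sc_add; case: eqP => [Eab H|Nab].
  + by have [j Hj] := IHa H; exists j; rewrite /f7 /= -/(f7 _ a) Hj S7_addinfl.
  + move=> _; rewrite -/(Sce k a) -/(Sce k b); case Ea: (Sce k a) Nab => [Y1|]; last first.
      by have [j Hj] := IHa Ea; exists j; rewrite /f7 /= -/(f7 _ a) Hj S7_addinfl.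
    case Eb: (Sce k b) => [Y2|] Nab; last first.
      by have [j Hj] := IHb Eb; exists j; rewrite /f7 /= -/(f7 _ b) Hj S7_addinfr.
    have NY : val Y1 != val Y2.
      apply/negP => /eqP /val_inj HY; apply: Nab.
      by move: Ea Eb; rewrite /Sce HY => -> ->.
    have : ~~ [forall j, (j \in val Y1) == (j \in val Y2)].
      apply: contra NY => /forallP H; apply/eqP/setP => j; exact/eqP/H.
    rewrite negb_forall => /existsP [j Hj]; exists j.
    rewrite /f7 /= -/(f7 _ a) -/(f7 _ b) (Inv2 Ea) (Inv2 Eb) !big_ej.
    by move: Hj; do 2 case: (_ \in _).
- rewrite /Sce /=; rewrite -/(Sce k a) -/(Sce k b); case Ea: (Sce k a) => [Y1|]; last first.
    by have [j Hj] := IHa Ea; exists j; rewrite /f7 /= -/(f7 _ a) Hj S7_mulinfl.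
  case Eb: (Sce k b) => [Y2|]; last first.
    by have [j Hj] := IHb Eb; exists j; rewrite /f7 /= -/(f7 _ b) Hj S7_mulinfr.
  rewrite /Sc_mul; case: ifP => Hdis.
    case: insubP => [//|Hn _]; exfalso; move: Hn; apply/negP; rewrite negbK.
    have /set0Pn [x Hx] := valP Y1; by apply/set0Pn; exists x; rewrite in_setU Hx.
  move=> _; move: Hdis; rewrite -setI_eq0 => /negbT /set0Pn [j]; rewrite in_setI => /andP[H1 H2].
  exists j; rewrite /f7 /= -/(f7 _ a) -/(f7 _ b) (Inv2 Ea) (Inv2 Eb) !big_ej.
  by rewrite H1 H2.
Qed.

Lemma ev_ord k (i : 'I_k) : ev k (val i) = Some (sing i).
Proof. by rewrite /ev valK. Qed.

Lemma Sce_mulvar k t Y (i : 'I_k) : Sce k t = Some Y -> i \notin val Y ->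
  exists Z, Sce k (Mul t (Var i)) = Some Z /\ val Z = val Y :|: [set i].
Proof.
move=> Ht Hi; rewrite /Sce /= -/(Sce k t) Ht ev_ord /Sc_mul /=.
rewrite disjoint_sym disjoints1 Hi; case: insubP => [Z _ HZ|Hn]; first by exists Z.
exfalso; move/negP: Hn; apply; have /set0Pn [x Hx] := valP Y.
by apply/set0Pn; exists x; rewrite in_setU Hx.
Qed.

Lemma mulopt_some k (l : seq 'I_k) t Y : Sce k t = Some Y -> uniq l ->
  (forall i, i \in l -> i \notin val Y) ->
  exists X, Sce k (mulopt t l) = Some X /\ val X = val Y :|: [set i in l].
Proof.
elim: l t Y => [|i l IH] t Y Ht /=.
  by move=> _ _; exists Y; split => //; apply/setP => x; rewrite !inE orbF.
move=> /andP[il ul] Hl.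
have [Z [HZ EZ]] := Sce_mulvar Ht (Hl i (mem_head _ _)).
have Hl' : forall j, j \in l -> j \notin val Z.
  move=> j Hj; rewrite EZ !inE negb_or Hl ?inE ?Hj ?orbT //=.
  by apply: contraNneq il => <-.
have [X [HX EX]] := IH _ _ HZ ul Hl'.
exists X; split => //; rewrite EX EZ; apply/setP => x; rewrite !inE.
by rewrite -!orbA.
Qed.

Lemma mulopt_inv k (l : seq 'I_k) t X : Sce k (mulopt t l) = Some X ->
  exists Y, Sce k t = Some Y /\ (forall i, i \in l -> i \notin val Y) /\
    val X = val Y :|: [set i in l].
Proof.
elim: l t => [|i l IH] t /=.
  by move=> H; exists X; split => //; split => //; apply/setP => x; rewrite !inE orbF.
move=> /IH [Z [HZ [Hl EX]]].
move: HZ; rewrite /Sce /= -/(Sce k t) ev_ord.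
case Et: (Sce k t) => [Y|] //; rewrite /Sc_mul /=.
case: ifP => // Hd; case: insubP => // Z' _ HZ' [EZ]; subst Z'.
exists Y; split => //; split.
  move=> j; rewrite inE => /orP [/eqP ->|Hj].
    by move: Hd; rewrite disjoint_sym disjoints1.
  by have := Hl j Hj; rewrite HZ' !inE negb_or => /andP[].
by rewrite EX HZ'; apply/setP => x; rewrite !inE -!orbA.
Qed.

Definition term_of k (y : Sc k) : term :=
  match y with
  | None => Mul (prodx k) (prodx k)
  | Some X => match [pick i in val X] with
              | Some i0 => mulopt (Var i0) (enum (val X :\ i0))
              | None => prodx k end
  end.

Lemma bigS7_all k (F : 'I_k -> S7) :
  \big[S7_mul/S7one]_(i < k) F i = \big[S7_mul/S7one]_(i in [set: 'I_k]) F i.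
Proof. by apply: eq_bigl => i; rewrite inE. Qed.

Lemma prodx_ej k (hk : 0 < k) (j : 'I_k) : f7 (ej j) (prodx k) = S7a.
Proof. by rewrite prodx_big // bigS7_all big_ej inE. Qed.

Lemma Sce_prodx k (hk : 0 < k) : Sce k (prodx k) <> None.
Proof. by move/(InvN hk) => [j]; rewrite prodx_ej. Qed.

Lemma Sce_pp k : Sce k (Mul (prodx k) (prodx k)) = None.
Proof.
rewrite /Sce /= -/(Sce k (prodx k)); case: (Sce k (prodx k)) => [Y|] //=.
rewrite /Sc_mul -setI_eq0 setIid (negbTE (valP Y)) //.
Qed.

Lemma Sce_term_of k (hk : 0 < k) y : Sce k (term_of y) = y.
Proof.
case: y => [X|]; last exact: Sce_pp.
rewrite /term_of; case: pickP => [i0 Hi0|H]; last first.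
  by exfalso; have /set0Pn [x Hx] := valP X; rewrite H in Hx.
have Hv : Sce k (Var i0) = Some (sing i0) by rewrite /Sce /= ev_ord.
have Hd : forall i, i \in enum (val X :\ i0) -> i \notin val (sing i0).
  by move=> i; rewrite mem_enum !inE => /andP[].
have [X' [HX' EX']] := mulopt_some Hv (enum_uniq _) Hd.
rewrite HX'; congr Some; apply: val_inj; rewrite EX' /=.
apply/setP => x; rewrite !inE mem_enum !inE.
by case: eqP => // ->; rewrite Hi0.
Qed.

Lemma vlt_term_of k (hk : 0 < k) (y : Sc k) : vlt k (term_of y).
Proof.
case: y => [X|] /=; last by rewrite vlt_prodx.
case: pickP => [i0 _|_]; last exact: vlt_prodx.
by apply: vlt_mulopt; rewrite /= ltn_ord.
Qed.

Definition swp k (i j : 'I_k) (n : nat) : nat :=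
  if n == val i then val j else if n == val j then val i else n.
Definition sw k (i j : 'I_k) (x : 'I_k) : 'I_k :=
  if x == i then j else if x == j then i else x.

Lemma sw_inj k (i j : 'I_k) : injective (sw i j).
Proof.
apply: (can_inj (g := sw i j)) => x; rewrite /sw.
case: (x =P i) => [->|Hxi]; first by rewrite eqxx; case: (j =P i) => [->|]; rewrite ?eqxx.
case: (x =P j) => [->|Hxj]; first by rewrite eqxx.
by move/eqP/negbTE: Hxi => ->; move/eqP/negbTE: Hxj => ->.
Qed.

Lemma swp_val k (i j : 'I_k) (x : 'I_k) : swp i j (val x) = val (sw i j x).
Proof. by rewrite /swp /sw !(inj_eq val_inj); case: (x == i); case: (x == j). Qed.

Lemma swp_lt k (i j : 'I_k) n : n < k -> swp i j n < k.
Proof. by move=> Hn; have := swp_val i j (Ordinal Hn) => /= ->. Qed.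

Lemma prodx_perm k (hk : 0 < k) (i j : 'I_k) v :
  f7 (fun n => v (swp i j n)) (prodx k) = f7 v (prodx k).
Proof.
rewrite !prodx_big //; rewrite [RHS](reindex_inj (@sw_inj k i j)) /=.
by apply: eq_bigr => x _; rewrite swp_val.
Qed.

Lemma S7_mul_one x y : S7_mul x y = S7one -> x = S7one /\ y = S7one.
Proof. by case: x; case: y. Qed.

Lemma big_one k (F : 'I_k -> S7) : \big[S7_mul/S7one]_(i < k) F i = S7one ->
  forall i, F i = S7one.
Proof. by move=> H i; move: H; rewrite (bigD1 i) //= => /S7_mul_one []. Qed.

Lemma big_a k (F : 'I_k -> S7) : \big[S7_mul/S7one]_(i < k) F i = S7a ->
  exists i0, F i0 = S7a /\ forall i, i != i0 -> F i = S7one.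
Proof.
move=> H.
case: (boolP [exists i, F i == S7a]) => [/existsP [i0 /eqP Hi0]|Hna].
  exists i0; split => // i Hi; move: H; rewrite (bigD1 i0) //= (bigD1 i) //= Hi0.
  by case: (F i) => //; case: (\big[_/_]_(_ | _) _).
exfalso.
case: (boolP [exists i, F i == S7inf]) => [/existsP [i /eqP Hi]|Hni].
  by move: H; rewrite (bigD1 i) //= Hi.
move: H; rewrite big1 // => i _.
move: Hna Hni; rewrite !negb_exists => /forallP /(_ i) + /forallP /(_ i).
by case: (F i).
Qed.

Lemma ej_ord k (j x : 'I_k) : ej j (val x) = if x == j then S7a else S7one.
Proof. by rewrite /ej (inj_eq val_inj) ltn_ord. Qed.

Lemma f7_agree k v v' t : vlt k t -> (forall n, n < k -> v n = v' n) -> f7 v t = f7 v' t.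
Proof. exact: eval_agree. Qed.

Definition bigR k (g : 'I_k -> term) (base : term) :=
  foldr (fun i acc => Add (g i) acc) base (enum 'I_k).

Lemma fold_inf k (g : 'I_k -> term) base v (l : seq 'I_k) :
  (f7 v base = S7inf \/ exists2 i, i \in l & f7 v (g i) = S7inf) ->
  f7 v (foldr (fun i acc => Add (g i) acc) base l) = S7inf.
Proof.
elim: l => [|i l IH] /=; first by case=> // [[i]].
case=> [Hb|[i' Hi' Hg]]; rewrite /f7 /= -/(f7 _ (g i)) -/(f7 _ (foldr _ _ _)).
  by rewrite IH ?S7_addinfr //; left.
move: Hi'; rewrite inE => /orP [/eqP Ei|Hl].
  by subst i'; rewrite Hg S7_addinfl.
by rewrite IH ?S7_addinfr //; right; exists i'.
Qed.

Lemma fold_one k (g : 'I_k -> term) base v (l : seq 'I_k) :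
  f7 v base = S7one -> (forall i, f7 v (g i) = S7one) ->
  f7 v (foldr (fun i acc => Add (g i) acc) base l) = S7one.
Proof.
move=> Hb Hg; elim: l => [|i l IH] //=.
by rewrite /f7 /= -/(f7 _ (g i)) -/(f7 _ (foldr _ _ _)) IH Hg.
Qed.

Lemma fold_T T (add mul : T -> T -> T) (idem : forall x, add x x = x)
  k (g : 'I_k -> term) base c (l : seq 'I_k) :
  (forall i, eval add mul c (g i) = eval add mul c base) ->
  eval add mul c (foldr (fun i acc => Add (g i) acc) base l) = eval add mul c base.
Proof. by move=> Hg; elim: l => [|i l IH] //=; rewrite IH Hg idem. Qed.

Lemma TS7 T (add mul : T -> T -> T) (HT : in_VS7 add mul) u w :
  (forall v, f7 v u = f7 v w) -> forall c, eval add mul c u = eval add mul c w.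
Proof. by move=> H c; apply: HT. Qed.

Lemma T_idem T (add mul : T -> T -> T) (HT : in_VS7 add mul) x : add x x = x.
Proof.
have := @HT (Add (Var 0) (Var 0)) (Var 0) (fun v => S7_addid _) (fun _ => x).
by [].
Qed.

Lemma step67 k (hk : 0 < k) T (add mul : T -> T -> T) (HT : in_VS7 add mul)
  s (j : 'I_k) (Hs : vlt k s) (Hj : f7 (ej j) s != S7a)
  (Hps : forall c, eval add mul c (prodx k) = eval add mul c s) :
  forall c, eval add mul c (prodx k) = eval add mul c (Mul (prodx k) (prodx k)).
Proof.
set p := prodx k.
pose r := Add p s.
pose g := fun i : 'I_k => subst (fun n => Var (swp i j n)) r.
pose R := foldr (fun i acc => Add (g i) acc) p (enum 'I_k).
have idem := T_idem HT.
have Hperm : forall i v, f7 v (subst (fun n => Var (swp i j n)) p) = f7 v p.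
  by move=> i v; rewrite /f7 eval_subst /= -/(f7 _ p) prodx_perm.
have T1 : forall c, eval add mul c R = eval add mul c p.
  move=> c; apply: fold_T => // i.
  rewrite /g eval_subst /= -Hps idem.
  rewrite -(eval_subst add mul c (fun n => Var (swp i j n)) p).
  by apply: (TS7 HT (Hperm i)).
have T2 : forall v, f7 v R = f7 v (Mul p p).
  move=> v.
  have Eg : forall i, f7 v (g i) = S7_add (f7 (fun n => v (swp i j n)) p)
                                          (f7 (fun n => v (swp i j n)) s).
    by move=> i; rewrite /g /f7 eval_subst.
  rewrite [RHS]/f7 /= -/(f7 v p).
  case EP: (f7 v p).
  - by rewrite fold_inf //; left.
  - move: EP; rewrite /p prodx_big // => /big_a [i0 [Hi0 H1]].
    apply: fold_inf; right; exists i0; first by rewrite mem_enum.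
    have Ag : forall n, n < k -> v (swp i0 j n) = ej j n.
      move=> n Hn; have -> : n = val (Ordinal Hn) by [].
      rewrite swp_val ej_ord /sw; set x := Ordinal Hn.
      case: (x =P i0) => [Exi|Nxi].
        case: (j =P i0) => [Eji|Nji]; first by rewrite Eji Exi eqxx Hi0.
        rewrite H1; last by apply/eqP.
        by rewrite Exi; case: (i0 =P j) => // E; exfalso; apply: Nji; rewrite E.
      case: (x =P j) => [_|Nxj]; first by [].
      by rewrite H1 //; apply/eqP.
    rewrite Eg (f7_agree (vlt_prodx hk) Ag) (f7_agree Hs Ag).
    by rewrite prodx_ej //; move: Hj; case: (f7 (ej j) s).
  - move: EP; rewrite /p prodx_big // => /big_one H1.
    have Ag : forall i n, n < k -> v (swp i j n) = (fun _ => S7one) n.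
      move=> i n Hn; have -> : n = val (Ordinal Hn) by [].
      by rewrite swp_val H1.
    rewrite fold_one //; first by rewrite /f7 -/(f7 v p) /p prodx_big // big1.
    move=> i; rewrite Eg (f7_agree (vlt_prodx hk) (Ag i)) (f7_agree Hs (Ag i)).
    by rewrite /f7 !eval_one.
move=> c; rewrite -T1; apply: (TS7 HT T2).
Qed.

Lemma core k (hk : 0 < k) T (add mul : T -> T -> T) (HT : in_VS7 add mul)
  U W Y (HU : Sce k U = Some Y) (HW : Sce k W <> Some Y) (HvW : vlt k W)
  (HUW : forall c, eval add mul c U = eval add mul c W) :
  satisfies add mul (prodx k) (Mul (prodx k) (prodx k)).
Proof.
pose l := enum (~: val Y).
have Hl : forall i, i \in l -> i \notin val Y by move=> i; rewrite mem_enum inE.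
have [X [HX EX]] := mulopt_some HU (enum_uniq _) Hl.
have EXT : val X = [set: 'I_k].
  by rewrite EX; apply/setP => x; rewrite !inE mem_enum inE orbN.
have S1 : forall v, f7 v (mulopt U l) = f7 v (prodx k).
  by move=> v; rewrite (Inv2 HX) EXT -bigS7_all prodx_big.
have Hps : forall c, eval add mul c (prodx k) = eval add mul c (mulopt W l).
  move=> c; rewrite -(TS7 HT S1 c); exact: eval_mulopt_cong.
have [j Hj] : exists j : 'I_k, f7 (ej j) (mulopt W l) != S7a.
  case Es: (Sce k (mulopt W l)) => [X'|]; last first.
    by have [j Hj] := InvN hk Es; exists j; rewrite Hj.
  have [Y' [HW' [Hl' EX']]] := mulopt_inv Es.
  have : ~~ [forall j, j \in val X'].
    apply/negP => /forallP Hall; apply: HW; rewrite HW'; congr Some; apply: val_inj.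
    apply/setP => x; apply/idP/idP => Hx.
      case: (boolP (x \in val Y)) => // HxY; exfalso.
      by move: (Hl' x); rewrite mem_enum inE HxY Hx => /(_ isT).
    have := Hall x; rewrite EX' in_setU => /orP [] // .
    by rewrite inE mem_enum inE Hx.
  rewrite negb_forall => /existsP [j Hj]; exists j.
  by rewrite (Inv2 Es) big_ej (negbTE Hj).
exact: (step67 hk HT (vlt_mulopt l HvW) Hj Hps).
Qed.

Lemma key k (hk : 0 < k) T (add mul : T -> T -> T) (HT : in_VS7 add mul) u w
  (Huw : satisfies add mul u w) (Hsc : ~ satisfies (@Sc_add k) (@Sc_mul k) u w) :
  satisfies add mul (prodx k) (Mul (prodx k) (prodx k)).
Proof.
have [v Hv] : exists v, eval (@Sc_add k) (@Sc_mul k) v u <> eval (@Sc_add k) (@Sc_mul k) v w.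
  apply: NNPP => H; apply: Hsc => v; apply: NNPP => Hn; apply: H; by exists v.
pose sg := fun n => term_of (v n).
have ES : forall t, Sce k (subst sg t) = eval (@Sc_add k) (@Sc_mul k) v t.
  by move=> t; rewrite /Sce eval_subst; apply: eval_ext => n; exact: Sce_term_of.
have Vs : forall t, vlt k (subst sg t).
  by move=> t; apply: vlt_subst => n; apply: vlt_term_of.
have HUW : forall c, eval add mul c (subst sg u) = eval add mul c (subst sg w).
  by move=> c; rewrite !eval_subst; apply: Huw.
case EU: (Sce k (subst sg u)) => [Y|].
  apply: (core hk HT EU _ (Vs w) HUW).
  by move=> E; apply: Hv; rewrite -!ES EU E.
case EW: (Sce k (subst sg w)) => [Y|].
  apply: (core hk HT EW _ (Vs u)) => [|c]; last by rewrite HUW.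
  by rewrite EU.
by exfalso; apply: Hv; rewrite -!ES EU EW.
Qed.

Theorem proposition3p8 (Sigma : term -> term -> Prop) (k : nat) (hk : 1 <= k) :
  ~ in_subvar Sigma (@Sc_add k) (@Sc_mul k) <->
  subvar_satisfies Sigma (prodx k) (Mul (prodx k) (prodx k)).
Proof.
split.
- move=> Hnot T add mul [HV HS] c; apply: NNPP => Hneq; apply: Hnot; split.
  + move=> u w H7; apply: NNPP => Hn; apply: Hneq.
    exact: (key hk HV (HV u w H7) Hn).
  + move=> u w Hs; apply: NNPP => Hn; apply: Hneq.
    exact: (key hk HV (HS u w Hs) Hn).
- move=> H Hin; have := H _ _ _ Hin (@ev k).
  change (Sce k (prodx k) = Sce k (Mul (prodx k) (prodx k)) -> False).
  by rewrite Sce_pp; apply: Sce_prodx.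
Qed.
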